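(* Let $1\le n\le L$. If $q_i=p_i$ for all $i$, then $$Z_{L,n}=\binom{L-1}{n-1}\,e_{n-1}(p_1,\dots,p_n)^{L-n},$$ where $e_{n-1}$ is the elementary symmetric polynomial of degree $n-1$.
   Context: Particle labels are taken modulo $n$. $\Omega_{L,n}$ is the set of words $w_1\cdots w_L$ on the ring $\mathbb{Z}/L\mathbb{Z}$ over the alphabet $\{\bullet_1,\dots,\bullet_n,\Box_1,\dots,\Box_n\}$ in which each $\bullet_k$ occurs exactly once, the $\bullet_1,\dots,\bullet_n$ appear in this cyclic order, and the remaining $L-n$ letters are arbitrary $\Box_i$'s. For $w\in\Omega_{L,n}$ let $b_k$ be the position of $\bullet_k$ and $C_k$ the set of positions strictly between $b_k$ and $b_{k+1}$ going cyclically forward ($b_{n+1}=b_1$). For $i,k\in\{1,\dots,n\}$ set $w_\Box(i,k)=p_1\cdots p_{i-1}q_{i+1}\cdots q_kp_{k+1}\cdots p_n$ if $i\le k$ and $w_\Box(i,k)=q_1\cdots q_kp_{k+1}\cdots p_{i-1}q_{i+1}\cdots q_n$ if $k<i$ (empty products are $1$). The weight is $\mathrm{wt}(w)=\prod_{k=1}^n\prod_{j\in C_k}w_\Box(i_j,k)$ where $w_j=\Box_{i_j}$. The restricted partition function is $Z_{L,n}=\sum\mathrm{wt}(w)$, the sum over $w\in\Omega_{L,n}$ with $w_1=\bullet_1$; it is a polynomial in $p_1,\dots,p_n,q_1,\dots,q_n$, and the claim is about its specialization. *)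

(* Defs.v *)
From HB Require Import structures.
From mathcomp Require Import all_boot all_order all_algebra.
Set Implicit Arguments. Unset Strict Implicit. Unset Printing Implicit Defensive.
Import Order.TTheory GRing.Theory.
Local Open Scope ring_scope.

(* Conventions: particle labels 1..n are represented by 'I_n (label m+1 <-> m),
   positions 1..L of the ring Z/LZ by 'I_L (position j+1 <-> j).
   A letter is  inl k = bullet_(k+1)  or  inr i = box_(i+1). *)
Definition letter (n : nat) := ('I_n + 'I_n)%type.
Definition word (L n : nat) := {ffun 'I_L -> letter n}.

Definition wbox_factor (R : pzRingType) n (p q : 'I_n -> R) (i k m : 'I_n) : R :=
  if m == i then 1
  else if (i <= k)%N then
    (if (m < i)%N then p m else if (m <= k)%N then q m else p m)
  else
    (if (m <= k)%N then q m else if (m < i)%N then p m else q m).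

Definition wbox (R : comPzRingType) n (p q : 'I_n -> R) (i k : 'I_n) : R :=
  \prod_(m < n) wbox_factor p q i k m.

Definition restricted_word L n (w : word L n) : bool :=
  [&& [forall k : 'I_n, #|[set j | w j == inl k]| == 1%N],
      [forall j : 'I_L, (val j == 0%N) ==>
          [exists k : 'I_n, (val k == 0%N) && (w j == inl k)]] &
      (* bullets in cyclic order, read from position 1 where bullet_1 sits *)
      [forall k1 : 'I_n, forall k2 : 'I_n, forall j1 : 'I_L, forall j2 : 'I_L,
          [&& (k1 < k2)%N, w j1 == inl k1 & w j2 == inl k2] ==> (j1 < j2)%N]].

Definition bpos L n (w : word L n) (k : 'I_n) : nat :=
  if [pick j | w j == inl k] is Some j then val j else 0%N.

Definition next_label n (k : 'I_n) : 'I_n := ordS k.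

(* C_k: positions strictly between b_k and b_(k+1), going cyclically forward;
   when b_(k+1) = b_k (n = 1) this is every other position of the ring. *)
Definition inC L n (w : word L n) (k : 'I_n) (j : 'I_L) : bool :=
  let bk := bpos w k in
  let bk1 := bpos w (next_label k) in
  let d := if bk1 == bk then L else ((bk1 + L - bk) %% L)%N in
  let e := ((val j + L - bk) %% L)%N in
  (0 < e)%N && (e < d)%N.

Definition box_label n (x : letter n) (dflt : 'I_n) : 'I_n :=
  match x with inr i => i | inl _ => dflt end.

Definition wt (R : comPzRingType) L n (p q : 'I_n -> R) (w : word L n) : R :=
  \prod_(k < n) \prod_(j < L | inC w k j) wbox p q (box_label (w j) k) k.

Definition Z_Ln (R : comPzRingType) L n (p q : 'I_n -> R) : R :=
  \sum_(w : word L n | restricted_word w) wt p q w.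

Definition elem_sym (R : comPzRingType) n (r : nat) (p : 'I_n -> R) : R :=
  \sum_(A : {set 'I_n} | #|A| == r) \prod_(m in A) p m.

(* Main.v *)
Require Import Defs.
From HB Require Import structures.
From mathcomp Require Import all_boot all_order all_algebra zify.
Import GRing.Theory.
Set Implicit Arguments. Unset Strict Implicit.
Local Open Scope ring_scope.

Lemma restr_card L n (w : word L n) : restricted_word w ->
  forall k, exists j, [set j0 | w j0 == inl k] = [set j].
Proof.
case/and3P => /forallP H1 _ _ k; exact/cards1P/H1.
Qed.

Lemma bposP L n (w : word L n) : restricted_word w ->
  forall k, exists2 j : 'I_L, w j = inl k & bpos w k = j.
Proof.
move=> Hw k; have [j Hj] := restr_card Hw k.
have wj : w j = inl k by apply/eqP; have := set11 j; rewrite -Hj inE.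
exists j => //; rewrite /bpos; case: pickP => [j' /eqP wj'|/(_ j)]; last by rewrite wj eqxx.
have : j' \in [set j0 | w j0 == inl k] by rewrite inE wj'.
by rewrite Hj inE => /eqP ->.
Qed.

Lemma bpos_eq L n (w : word L n) : restricted_word w ->
  forall (j : 'I_L) k, w j = inl k -> bpos w k = j.
Proof.
move=> Hw j k wj; have [j' wj' ->] := bposP Hw k.
have [j0 Hj] := restr_card Hw k.
have : j \in [set j0 | w j0 == inl k] by rewrite inE wj.
have : j' \in [set j0 | w j0 == inl k] by rewrite inE wj'.
by rewrite Hj !inE => /eqP -> /eqP ->.
Qed.

Lemma bpos_lt L n (w : word L n) : restricted_word w -> forall k, (bpos w k < L)%N.
Proof. by move=> Hw k; have [j _ ->] := bposP Hw k. Qed.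

Lemma bpos_mono L n (w : word L n) : restricted_word w ->
  forall k1 k2 : 'I_n, (k1 < k2)%N -> (bpos w k1 < bpos w k2)%N.
Proof.
move=> Hw k1 k2 lt12; have [j1 w1 ->] := bposP Hw k1; have [j2 w2 ->] := bposP Hw k2.
case/and3P: Hw => _ _ /forallP H3.
move: (H3 k1) => /forallP/(_ k2)/forallP/(_ j1)/forallP/(_ j2).
by rewrite lt12 w1 w2 !eqxx.
Qed.

Lemma bpos_le L n (w : word L n) : restricted_word w ->
  forall k1 k2 : 'I_n, (k1 <= k2)%N -> (bpos w k1 <= bpos w k2)%N.
Proof.
move=> Hw k1 k2; rewrite leq_eqVlt => /orP [/eqP e|/(bpos_mono Hw) /ltnW //].
by rewrite (val_inj e).
Qed.

Lemma bpos0 L n (w : word L n) : restricted_word w ->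
  forall k : 'I_n, val k = 0%N -> bpos w k = 0%N.
Proof.
move=> Hw k k0; have [j wj bj] := bposP Hw k.
have L0 : (0 < L)%N by apply: leq_ltn_trans (ltn_ord j).
have Hw' := Hw; case/and3P: Hw' => _ /forallP/(_ (Ordinal L0)) /= H2 _.
case/existsP: H2 => k' /andP [/eqP k'0 /eqP wk'].
have -> : k = k' by apply: val_inj; exact: etrans k0 (esym k'0).
by rewrite (bpos_eq Hw wk').
Qed.

Lemma modL x L : (0 < L)%N -> (x < L + L)%N -> (x %% L = if (x < L)%N then x else x - L)%N.
Proof.
move=> L0 xL; case: ifP => h; first by rewrite modn_small.
have -> : x = (x - L + L)%N by lia.
by rewrite modnDr modn_small; lia.
Qed.

Lemma inC_char L n (w : word L n) : restricted_word w -> forall k j,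
  inC w k j = (bpos w k < j)%N && ((k.+1 == n) || (j < bpos w (next_label k))%N).
Proof.
move=> Hw k j; rewrite /inC /next_label; change (\val j) with (nat_of_ord j).
have jL := ltn_ord j.
have L0 : (0 < L)%N by lia.
have bkL := bpos_lt Hw k; have bk1L := bpos_lt Hw (ordS k).
rewrite !modL; try lia.
case: (ltnP k.+1 n) => hk.
  have e1 : val (ordS k) = k.+1 by rewrite /= modn_small.
  have := bpos_mono Hw (k1:=k) (k2:=ordS k); rewrite e1 ltnSn => /(_ isT) mono.
  by repeat case: ifP => ?; lia.
have e1 : val (ordS k) = 0%N by rewrite /= (_ : k.+1 = n) ?modnn //; have := ltn_ord k; lia.
have b1 := bpos0 Hw e1.
have kn := ltn_ord k.
have [k0|kp] := eqVneq (nat_of_ord k) 0%N.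
  have b0 := bpos0 Hw k0.
  by repeat case: ifP => ?; lia.
have := bpos_mono Hw (k1:=ordS k) (k2:=k); rewrite e1 lt0n kp => /(_ isT) mono.
by repeat case: ifP => ?; lia.
Qed.

Lemma next_val n (k : 'I_n) : (k.+1 < n)%N -> val (next_label k) = k.+1.
Proof. by move=> h; rewrite /= modn_small. Qed.

Lemma inC_bullet L n (w : word L n) : restricted_word w -> forall k j k',
  w j = inl k' -> inC w k j = false.
Proof.
move=> Hw k j k' wj; rewrite (inC_char Hw); apply/negbTE/negP => /andP [lt1 h2].
have bj := bpos_eq Hw wj.
have kk : (k < k')%N.
  rewrite ltnNge; apply/negP => /(bpos_le Hw); rewrite bj; lia.
have kn := ltn_ord k'.
have hn : (k.+1 < n)%N by lia.
move: h2; rewrite (_ : (k.+1 == n) = false) /=; last by lia.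
have := bpos_le Hw (k1:=next_label k) (k2:=k'); rewrite next_val // kk bj => /(_ isT).
lia.
Qed.

Lemma inC_box L n (w : word L n.+1) : restricted_word w -> forall j i,
  w j = inr i -> exists k0, forall k, inC w k j = (k == k0).
Proof.
move=> Hw j i wj.
have P0 : (bpos w ord0 <= j)%N by rewrite (bpos0 Hw (k:=ord0)).
case: (@arg_maxnP _ ord0 (fun k : 'I_n.+1 => bpos w k <= j)%N (fun k : 'I_n.+1 => nat_of_ord k) P0) => k0 Pk0 maxk0.
have bk0 : (bpos w k0 < j)%N.
  rewrite ltn_neqAle Pk0 andbT; apply/negP => /eqP e.
  have [j' wj' e'] := bposP Hw k0.
  have jj : j' = j by apply: val_inj; rewrite /= -e' e.
  by rewrite jj wj in wj'.
exists k0 => k; rewrite (inC_char Hw).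
have kn := ltn_ord k; have k0n := ltn_ord k0.
apply/idP/idP.
  case/andP => h1 h2; apply/eqP/val_inj => /=.
  have kle : (k <= k0)%N by apply: maxk0; lia.
  rewrite leq_eqVlt in kle; case/orP: kle => [/eqP //|klt].
  have hn : (k.+1 < n.+1)%N by lia.
  move: h2; rewrite (_ : (k.+1 == n.+1) = false) /=; last by lia.
  have := bpos_le Hw (k1:=next_label k) (k2:=k0); rewrite next_val // klt => /(_ isT).
  lia.
move/eqP => ->; rewrite bk0 /=.
case: (ltnP k0.+1 n.+1) => hn; last by rewrite (_ : (k0.+1 == n.+1)) //; lia.
rewrite (_ : (k0.+1 == n.+1) = false) /=; last by lia.
rewrite ltnNge; apply/negP => /maxk0; rewrite next_val //; lia.
Qed.

Definition cc (R : comPzRingType) n (p : 'I_n -> R) (i : 'I_n) : R :=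
  \prod_(m < n | m != i) p m.
Definition hh (R : comPzRingType) n (p : 'I_n -> R) (x : letter n) : R :=
  if x is inr i then cc p i else 1.

Lemma wbox_pp (R : comPzRingType) n (p q : 'I_n -> R) (Hq : forall i, q i = p i) i k :
  wbox p q i k = cc p i.
Proof.
rewrite /wbox /cc [in RHS]big_mkcond /=; apply: eq_bigr => m _; rewrite /wbox_factor !Hq.
by case: eqP => _ //=; repeat case: ifP.
Qed.

Lemma wt_restr (R : comPzRingType) L n (p q : 'I_n.+1 -> R) (Hq : forall i, q i = p i) (w : word L n.+1) :
  restricted_word w -> wt p q w = \prod_j hh p (w j).
Proof.
move=> Hw; rewrite /wt.
rewrite /wt (eq_bigr (fun k => \prod_(j < L) (if inC w k j then wbox p q (box_label (w j) k) k else 1))); last by move=> k _; rewrite big_mkcond.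
rewrite exchange_big; apply: eq_bigr => j _.
case E: (w j) => [k'|i] /=.
  by apply: big1 => k _; rewrite (inC_bullet Hw k E).
have [k0 H] := inC_box Hw E.
rewrite (bigD1 k0) //= H eqxx (wbox_pp Hq) big1 ?mulr1 // => k /negbTE kk.
by rewrite H kk.
Qed.

Definition isbul n (x : letter n) : bool := if x is inl _ then true else false.
Definition rk L (S : {set 'I_L}) (j : 'I_L) : nat := #|[set x in S | (x < j)%N]|.
Definition cj L n (S : {set 'I_L}) (j : 'I_L) (x : letter n.+1) : bool :=
  if j \in S then x == inl (inord (rk S j)) else ~~ isbul x.
Definition compat L n (S : {set 'I_L}) (w : word L n.+1) : bool := [forall j, cj S j (w j)].
Definition valid L n (S : {set 'I_L.+1}) : bool := (ord0 \in S) && (#|S| == n.+1).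
Definition bset L n (w : word L n) : {set 'I_L} := [set j | isbul (w j)].

Lemma rk_lt L (S : {set 'I_L}) (x y : 'I_L) : x \in S -> (x < y)%N -> (rk S x < rk S y)%N.
Proof.
move=> xS xy; apply: proper_card; apply/properP; split.
  by apply/subsetP => z; rewrite !inE => /andP [-> /= zx]; lia.
by exists x; rewrite !inE xS //= ltnn.
Qed.

Lemma rk_le L (S : {set 'I_L}) (x y : 'I_L) : (x <= y)%N -> (rk S x <= rk S y)%N.
Proof.
move=> xy; apply: subset_leq_card.
by apply/subsetP => z; rewrite !inE => /andP [-> /= zx]; lia.
Qed.

Lemma rk_bound L (S : {set 'I_L}) x : x \in S -> (rk S x < #|S|)%N.
Proof.
move=> xS; apply: proper_card; apply/properP; split.
  by apply/subsetP => z; rewrite !inE => /andP [->].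
by exists x => //; rewrite !inE ltnn andbF.
Qed.

Lemma rk_inj L (S : {set 'I_L}) : {in S &, injective (rk S)}.
Proof.
move=> x y xS yS e; apply: val_inj => /=.
case: (ltngtP x y) => // h.
  by have := rk_lt xS h; rewrite e ltnn.
by have := rk_lt yS h; rewrite e ltnn.
Qed.

Lemma compat_restr L n (S : {set 'I_L.+1}) (w : word L.+1 n.+1) :
  valid n S -> compat S w -> restricted_word w.
Proof.
case/andP => S0 /eqP cS /forallP Hc.
have Hin j : j \in S -> w j = inl (inord (rk S j)).
  by move=> jS; move: (Hc j); rewrite /cj jS => /eqP.
have Hout j k : w j = inl k -> j \in S.
  by move=> wj; move: (Hc j); rewrite /cj wj; case: (j \in S).
have rkv j : j \in S -> nat_of_ord (inord (rk S j) : 'I_n.+1) = rk S j.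
  by move=> jS; rewrite inordK // -cS rk_bound.
pose f j : 'I_n.+1 := inord (rk S j).
have finj : {in S &, injective f}.
  move=> x y xS yS e; apply: (rk_inj xS yS).
  by rewrite -(rkv x xS) -(rkv y yS); congr val.
have fS : f @: S = setT.
  by apply/eqP; rewrite eqEcard subsetT /= cardsT card_ord card_in_imset // cS.
rewrite /restricted_word; apply/and3P; split.
- apply/forallP => k.
  have : k \in f @: S by rewrite fS inE.
  case/imsetP => j0 j0S ->.
  apply/cards1P; exists j0; apply/setP => j; rewrite !inE.
  apply/eqP/eqP => [wj|->]; last exact: Hin.
  have jS := Hout _ _ wj.
  by apply: finj => //; move: wj; rewrite Hin // => -[].
- apply/forallP => j; apply/implyP => /eqP j0.
  have -> : j = ord0 by apply: val_inj.
  apply/existsP; exists (f ord0); rewrite /f Hin // eqxx andbT.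
  apply/eqP; have -> : rk S ord0 = 0%N by apply/eqP; rewrite cards_eq0; apply/eqP/setP => z; rewrite !inE ltn0 andbF.
  exact: (inordK (n':=n) (ltn0Sn n)).
- apply/forallP => k1; apply/forallP => k2; apply/forallP => j1; apply/forallP => j2.
  apply/implyP => /and3P [lt12 /eqP w1 /eqP w2].
  have j1S := Hout _ _ w1; have j2S := Hout _ _ w2.
  move: w1 w2; rewrite !Hin // => -[e1] [e2].
  move: lt12; rewrite -e1 -e2 !rkv // => h.
  rewrite ltnNge; apply/negP => /(rk_le S); lia.
Qed.

Lemma card_ltk N (k : 'I_N) : #|[set k' : 'I_N | (k' < k)%N]| = k.
Proof.
have kN : (k <= N)%N := ltnW (ltn_ord k).
have -> : [set k' : 'I_N | (k' < k)%N] = (fun x : 'I_k => widen_ord kN x) @: setT.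
  apply/setP => z; rewrite inE; apply/idP/imsetP => [h|[x _ ->]] /=.
    by exists (Ordinal h) => //; apply: val_inj.
  exact: ltn_ord.
rewrite card_imset ?cardsT ?card_ord //.
by move=> x y /(congr1 val) /= e; apply: val_inj.
Qed.

Lemma restr_compat L n (w : word L.+1 n.+1) :
  restricted_word w -> valid n (bset w) && compat (bset w) w.
Proof.
move=> Hw.
pose g k : 'I_L.+1 := inord (bpos w k).
have wg k : w (g k) = inl k.
  have [j wj bj] := bposP Hw k; by rewrite /g bj inord_val.
have gv k : nat_of_ord (g k) = bpos w k.
  have [j wj bj] := bposP Hw k; by rewrite /g bj inord_val.
have ginj : injective g by move=> k1 k2 e; move: (wg k1); rewrite e wg => -[].
have Bg : bset w = g @: setT.
  apply/setP => j; rewrite inE; case E: (w j) => [k|i] /=.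
    apply/esym/imsetP; exists k => //; apply: val_inj => /=.
    by rewrite gv (bpos_eq Hw E).
  by apply/esym/imsetP => -[k _ e]; move: E; rewrite e wg.
apply/andP; split.
  rewrite /valid Bg card_imset // cardsT card_ord eqxx andbT.
  apply/imsetP; exists ord0 => //; apply: val_inj => /=.
  by rewrite gv (bpos0 Hw).
apply/forallP => j; rewrite /cj; case: ifP => jB; last by move: jB; rewrite inE => /negbT.
move: (jB); rewrite inE; case E: (w j) => [k|i] //= _.
have bj := bpos_eq Hw E.
suff -> : rk (bset w) j = k by rewrite inord_val.
rewrite /rk -[RHS](card_ltk k) -(card_imset _ ginj); apply: eq_card => x.
rewrite !inE; apply/idP/imsetP.
  case/andP; case Ex: (w x) => [k'|i'] //= _ xj.
  exists k'; last by apply: val_inj => /=; rewrite gv (bpos_eq Hw Ex).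
  rewrite inE ltnNge; apply/negP => /(bpos_le Hw); rewrite (bpos_eq Hw Ex) bj; lia.
case=> k'; rewrite inE => kk ->; rewrite wg /=.
by rewrite gv -bj; apply: bpos_mono.
Qed.

Lemma compat_bset L n (S : {set 'I_L}) (w : word L n.+1) : compat S w -> S = bset w.
Proof.
move/forallP => H; apply/setP => j; rewrite inE; move: (H j); rewrite /cj.
by case: (j \in S) => [/eqP -> //|/negbTE ->].
Qed.

Definition gg (R : comPzRingType) L n (p : 'I_n.+1 -> R) (S : {set 'I_L}) j (x : letter n.+1) : R :=
  (cj S j x)%:R * hh p x.

Lemma prod_gg (R : comPzRingType) L n (p : 'I_n.+1 -> R) (S : {set 'I_L}) (w : word L n.+1) :
  \prod_j gg p S j (w j) = (compat S w)%:R * \prod_j hh p (w j).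
Proof.
rewrite /gg big_split /=; congr (_ * _).
case: (boolP (compat S w)) => H.
  by apply: big1 => j _; move/forallP: H => /(_ j) ->.
move/forallPn: H => [j Hj]; rewrite (bigD1 j) //= (negbTE Hj) mul0r //.
Qed.

Lemma sum_valid (R : comPzRingType) L n (p : 'I_n.+1 -> R) (w : word L.+1 n.+1) :
  \sum_(S | valid n S) \prod_j gg p S j (w j) =
  if restricted_word w then \prod_j hh p (w j) else 0.
Proof.
rewrite (eq_bigr (fun S => (compat S w)%:R * \prod_j hh p (w j))); last by move=> S _; rewrite prod_gg.
case: ifP => Hw.
  have /andP [vB cB] := restr_compat Hw.
  rewrite (bigD1 (bset w)) //= cB mul1r [X in _ + X = _]big1 ?addr0 // => S /andP [vS nS].
  case: (boolP (compat S w)) => cS; last by rewrite mul0r.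
  by rewrite (compat_bset cS) eqxx in nS.
apply: big1 => S vS; case: (boolP (compat S w)) => cS; last by rewrite mul0r.
by rewrite (compat_restr vS cS) in Hw.
Qed.

Lemma sum_gg (R : comPzRingType) L n (p : 'I_n.+1 -> R) (S : {set 'I_L}) j :
  \sum_x gg p S j x = if j \in S then 1 else \sum_i cc p i.
Proof.
rewrite /gg /cj; case: ifP => jS.
  rewrite (bigD1 (inl (inord (rk S j)))) //= eqxx mul1r big1 ?addr0 // => x /negbTE -> .
  by rewrite mul0r.
rewrite big_sumType /= big1 ?add0r => [|k _]; last by rewrite mul0r.
by apply: eq_bigr => i _; rewrite mul1r.
Qed.

Lemma esym_cc (R : comPzRingType) n (p : 'I_n.+1 -> R) :
  \sum_i cc p i = elem_sym n p.
Proof.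
rewrite /elem_sym /cc.
pose h (A : {set 'I_n.+1}) : 'I_n.+1 := odflt ord0 [pick x in ~: A].
rewrite (reindex (fun i : 'I_n.+1 => [set~ i])) /=.
  apply: eq_big => [i|i _]; first by rewrite cardsC1 card_ord eqxx.
  by apply: eq_bigl => m; rewrite !inE.
exists h => [i _|A].
  rewrite /h; case: pickP => [y|/(_ i)]; last by rewrite !inE eqxx.
  by rewrite !inE negbK => /eqP.
rewrite inE => /eqP cA.
have : #|~: A| == 1%N by rewrite cardsCs setCK card_ord cA; apply/eqP; lia.
case/cards1P => x Hx; rewrite /h Hx.
case: pickP => [y|/(_ x)]; last by rewrite !inE eqxx.
rewrite inE => /eqP -> /=.
by rewrite -Hx setCK.
Qed.

Lemma card_valid L n : #|[set S : {set 'I_L.+1} | valid n S]| = 'C(L, n).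
Proof.
have -> : 'C(L, n) = #|[set B : {set 'I_L.+1} | B \subset [set~ ord0] & #|B| == n]|.
  by rewrite cards_draws cardsC1 card_ord.
have -> : [set B : {set 'I_L.+1} | B \subset [set~ ord0] & #|B| == n] =
          (fun S => S :\ ord0) @: [set S : {set 'I_L.+1} | valid n S].
  apply/setP => B; rewrite inE; apply/idP/imsetP.
    case/andP => sB /eqP cB; exists (ord0 |: B).
      rewrite inE /valid setU11 /= cardsU1 cB.
      have -> : ord0 \notin B by apply/negP => /(subsetP sB); rewrite !inE eqxx.
      by [].
    rewrite setU1K //; apply/negP => /(subsetP sB); rewrite !inE eqxx //.
  case=> S; rewrite inE => /andP [S0 /eqP cS] ->.
  apply/andP; split; first by apply/subsetP => x; rewrite !inE => /andP [->].
  by apply/eqP; move: cS; rewrite (cardsD1 ord0) S0 add1n => -[].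
rewrite card_in_imset // => S1 S2; rewrite !inE => /andP [h1 _] /andP [h2 _] e.
by rewrite -(setD1K h1) e setD1K.
Qed.

Theorem proposition4p10 (R : comPzRingType) (L n : nat) (p q : 'I_n -> R) :
  (1 <= n)%N -> (n <= L)%N -> (forall i, q i = p i) ->
  Z_Ln L p q = (binomial L.-1 n.-1)%:R * elem_sym n.-1 p ^+ (L - n).
Proof.
case: n p q => [//|n] p q _.
case: L => [//|L] nL Hq.
rewrite /Z_Ln.
rewrite (eq_bigr (fun w : word L.+1 n.+1 => \prod_j hh p (w j))); last by move=> w Hw; rewrite (wt_restr Hq Hw).
rewrite big_mkcond /=.
rewrite (eq_bigr (fun w : word L.+1 n.+1 => \sum_(S | valid n S) \prod_j gg p S j (w j))); last first.
  by move=> w _; rewrite sum_valid.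
rewrite exchange_big /=.
rewrite (eq_bigr (fun S => (\sum_i cc p i) ^+ (L.+1 - n.+1))); last first.
  move=> S /andP [S0 /eqP cS]; rewrite -bigA_distr_bigA /=.
  rewrite (eq_bigr (fun j => if j \in S then 1 else \sum_i cc p i)); last first.
    by move=> j _; rewrite sum_gg.
  transitivity (\prod_(j in ~: S) \sum_i cc p i).
    by rewrite [RHS]big_mkcond; apply: eq_bigr => j _; rewrite inE; case: (j \in S).
  rewrite prodr_const; congr (_ ^+ _); have := cardsC S; rewrite card_ord cS; lia.
transitivity (\sum_(S in [set S : {set 'I_L.+1} | valid n S]) (\sum_i cc p i) ^+ (L.+1 - n.+1)).
  by apply: eq_bigl => S; rewrite inE.
by rewrite sumr_const card_valid esym_cc mulr_natl.
Qed.
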